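(* For each order function $g$ there exists an order function $h$ such that every $\mathrm{DNR}_g$ function Turing-computes an $\mathrm{SNPR}_h$ function.
   Context: $\varphi_e$ denotes the $e$-th partial recursive function. A function $f:\omega\to\omega$ is DNR if $f(e)\neq\varphi_e(e)$ for every $e$ such that $\varphi_e(e)$ is defined. A function $f:\omega\to\omega$ is SNPR (strongly non-partial-recursive) if for every partial recursive function $\psi$, for all but finitely many $n$, if $\psi(n)$ is defined then $f(n)\neq\psi(n)$. An order function is a recursive, nondecreasing, unbounded function $h:\omega\to\omega$ with $h(0)\ge 2$. For a class $\mathrm{C}$ of functions and an order function $h$, $\mathrm{C}_h$ denotes the members of $\mathrm{C}$ bounded by $h$ (i.e., $f(n)<h(n)$ for all $n$). *)

(* Defs.v *)
From Stdlib Require Import Arith Cantor.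

Definition pr (x y : nat) : nat := Cantor.to_nat (x, y).
Definition p1 (n : nat) : nat := fst (Cantor.of_nat n).
Definition p2 (n : nat) : nat := snd (Cantor.of_nat n).

(* Unary mu-recursive function codes (on nat, arguments packed by pairing),
   with an extra oracle-query instruction. *)
Inductive code : Type :=
| cZero
| cSucc
| cFst
| cSnd
| cPair (f g : code)
| cComp (f g : code)
| cRec (f g : code)
| cMin (f : code)
| cOracle.

Inductive eval (O : nat -> nat) : code -> nat -> nat -> Prop :=
| eZero x : eval O cZero x 0
| eSucc x : eval O cSucc x (S x)
| eFst x : eval O cFst x (p1 x)
| eSnd x : eval O cSnd x (p2 x)
| ePair f g x a b : eval O f x a -> eval O g x b -> eval O (cPair f g) x (pr a b)
| eComp f g x y z : eval O g x y -> eval O f y z -> eval O (cComp f g) x z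
| eRec0 f g x y : eval O f x y -> eval O (cRec f g) (pr x 0) y
| eRecS f g x n a y :
    eval O (cRec f g) (pr x n) a -> eval O g (pr x (pr n a)) y ->
    eval O (cRec f g) (pr x (S n)) y
| eMin f x y :
    eval O f (pr x y) 0 ->
    (forall z, z < y -> exists w, w <> 0 /\ eval O f (pr x z) w) ->
    eval O (cMin f) x y
| eOracle x : eval O cOracle x (O x).

Fixpoint decode_aux (fuel n : nat) : code :=
  match fuel with
  | 0 => cZero
  | S k =>
    let m := n / 9 in
    match n mod 9 with
    | 0 => cZero
    | 1 => cSucc
    | 2 => cFst
    | 3 => cSnd
    | 4 => cPair (decode_aux k (p1 m)) (decode_aux k (p2 m))
    | 5 => cComp (decode_aux k (p1 m)) (decode_aux k (p2 m))
    | 6 => cRec (decode_aux k (p1 m)) (decode_aux k (p2 m))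
    | 7 => cMin (decode_aux k m)
    | _ => cOracle
    end
  end.
Definition decode (n : nat) : code := decode_aux n n.

(* Unrelativized computation: the oracle is the (recursive) constant-0 function,
   so the functions computed are exactly the partial recursive functions. *)
Definition eval0 (c : code) (x y : nat) : Prop := eval (fun _ => 0) c x y.

Definition phi (e x y : nat) : Prop := eval0 (decode e) x y.

Definition recursive (f : nat -> nat) : Prop :=
  exists c : code, forall n, eval0 c n (f n).

Definition Tcomputes (g f : nat -> nat) : Prop :=
  exists c : code, forall n, eval g c n (f n).

Definition DNR (f : nat -> nat) : Prop :=
  forall e y, phi e e y -> f e <> y.

Definition SNPR (f : nat -> nat) : Prop :=
  forall e, exists N, forall n y, N <= n -> phi e n y -> f n <> y.

Definition order_fun (h : nat -> nat) : Prop :=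
  recursive h /\
  (forall m n, m <= n -> h m <= h n) /\
  (forall k, exists n, k <= h n) /\
  2 <= h 0.

Definition bounded_by (h f : nat -> nat) : Prop := forall n, f n < h n.

(* Main.v *)
Require Import Defs.
From Stdlib Require Import Arith Cantor Lia.

Lemma pr_p n : pr (p1 n) (p2 n) = n.
Proof. unfold pr, p1, p2. rewrite <- surjective_pairing. apply cancel_to_of. Qed.
Lemma p1_pr a b : p1 (pr a b) = a.
Proof. unfold pr, p1. now rewrite cancel_of_to. Qed.
Lemma p2_pr a b : p2 (pr a b) = b.
Proof. unfold pr, p2. now rewrite cancel_of_to. Qed.
Lemma p12_le m : p1 m + p2 m <= m.
Proof. rewrite <- (pr_p m) at 3. unfold pr. pose proof (to_nat_non_decreasing (p1 m) (p2 m)). lia. Qed.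
Lemma pr_mono a b a' b' : a <= a' -> b <= b' -> pr a b <= pr a' b'.
Proof.
  intros. unfold pr. apply (Nat.mul_le_mono_pos_r _ _ 2); [lia|].
  rewrite !to_nat_spec. nia.
Qed.
Lemma pr_ge a b : a <= pr a b /\ b <= pr a b.
Proof. unfold pr. pose proof (to_nat_non_decreasing a b). lia. Qed.

Section CE.
Variable O : nat -> nat.
Definition ce (F : nat -> nat) := exists c, forall n, eval O c n (F n).

Lemma ce_ext F G : (forall n, F n = G n) -> ce F -> ce G.
Proof. intros H [c Hc]. exists c. intro n. rewrite <- H. apply Hc. Qed.
Lemma ce_id : ce (fun n => n).
Proof. exists (cPair cFst cSnd). intro n. pose proof (ePair O cFst cSnd n _ _ (eFst O n) (eSnd O n)).
  now rewrite pr_p in H. Qed.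
Lemma ce_const k : ce (fun _ => k).
Proof. induction k as [|k [c Hc]]. exists cZero. intro; constructor.
  exists (cComp cSucc c). intro n. econstructor. apply Hc. constructor. Qed.
Lemma ce_compf F A : ce F -> ce A -> ce (fun n => F (A n)).
Proof. intros [f Hf] [a Ha]. exists (cComp f a). intro; econstructor; eauto. Qed.
Lemma ce_pairf A B : ce A -> ce B -> ce (fun n => pr (A n) (B n)).
Proof. intros [f Hf] [a Ha]. exists (cPair f a). intro; econstructor; eauto. Qed.
Lemma ce_p1f A : ce A -> ce (fun n => p1 (A n)).
Proof. intros HA. apply (ce_compf p1); auto. exists cFst. intro; constructor. Qed.
Lemma ce_p2f A : ce A -> ce (fun n => p2 (A n)).
Proof. intros HA. apply (ce_compf p2); auto. exists cSnd. intro; constructor. Qed.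
Lemma ce_Sf A : ce A -> ce (fun n => S (A n)).
Proof. intros HA. apply (ce_compf S); auto. exists cSucc. intro; constructor. Qed.
Lemma ce_oracle : ce O.
Proof. exists cOracle. intro; constructor. Qed.

Lemma ce_2f F A B : ce (fun z => F (p1 z) (p2 z)) -> ce A -> ce B -> ce (fun n => F (A n) (B n)).
Proof.
  intros HF HA HB. eapply ce_ext. 2: apply (ce_compf _ _ HF (ce_pairf _ _ HA HB)).
  intro n. simpl. now rewrite p1_pr, p2_pr.
Qed.

Lemma ce_rec2 (F : nat -> nat -> nat) B St :
  (forall x, F x 0 = B x) -> (forall x n, F x (S n) = St (pr x (pr n (F x n)))) ->
  ce B -> ce St -> ce (fun z => F (p1 z) (p2 z)).
Proof.
  intros H0 HS [cb Hb] [cs Hs]. exists (cRec cb cs).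
  assert (K : forall x n, eval O (cRec cb cs) (pr x n) (F x n)).
  { intros x n; induction n. rewrite H0. constructor. apply Hb.
    rewrite HS. econstructor. apply IHn. apply Hs. }
  intro z. specialize (K (p1 z) (p2 z)). now rewrite pr_p in K.
Qed.

Lemma ce_rec1 (F : nat -> nat) b St :
  F 0 = b -> (forall n, F (S n) = St (pr n (F n))) -> ce St -> ce F.
Proof.
  intros H0 HS HSt.
  assert (K : ce (fun z => (fun _ n => F n) (p1 z) (p2 z))).
  { apply (ce_rec2 (fun _ n => F n) (fun _ => b) (fun z => St (p2 z))); auto.
    intros; now rewrite p2_pr. apply ce_const. apply (ce_compf St); auto. apply ce_p2f, ce_id. }
  eapply ce_ext. 2: apply (ce_2f (fun _ n => F n) (fun _ => 0) (fun n => n) K (ce_const 0) ce_id).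
  reflexivity.
Qed.

Lemma ce_add A B : ce A -> ce B -> ce (fun n => A n + B n).
Proof.
  intros HA HB. apply (ce_2f Nat.add); auto.
  apply (ce_rec2 _ (fun x => x) (fun z => S (p2 (p2 z)))).
  intro; lia. intros; rewrite !p2_pr; lia. apply ce_id. apply ce_Sf, ce_p2f, ce_p2f, ce_id.
Qed.
Lemma ce_mul A B : ce A -> ce B -> ce (fun n => A n * B n).
Proof.
  intros HA HB. apply (ce_2f Nat.mul); auto.
  apply (ce_rec2 _ (fun _ => 0) (fun z => p2 (p2 z) + p1 z)).
  intro; lia. intros; rewrite !p2_pr, p1_pr; lia. apply ce_const.
  apply ce_add. apply ce_p2f, ce_p2f, ce_id. apply ce_p1f, ce_id.
Qed.
Lemma ce_pred A : ce A -> ce (fun n => pred (A n)).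
Proof.
  intros HA. apply (ce_compf pred); auto.
  apply (ce_rec1 _ 0 (fun z => p1 z)). reflexivity. intros; now rewrite p1_pr.
  apply ce_p1f, ce_id.
Qed.
Lemma ce_sub A B : ce A -> ce B -> ce (fun n => A n - B n).
Proof.
  intros HA HB. apply (ce_2f Nat.sub); auto.
  apply (ce_rec2 _ (fun x => x) (fun z => pred (p2 (p2 z)))).
  intro; lia. intros; rewrite !p2_pr; lia. apply ce_id. apply ce_pred, ce_p2f, ce_p2f, ce_id.
Qed.
End CE.

Ltac ce_step := match goal with
  | |- ce _ (fun n => n) => apply ce_id
  | |- ce _ p1 => apply (ce_p1f _ (fun n => n)), ce_id
  | |- ce _ p2 => apply (ce_p2f _ (fun n => n)), ce_id
  | |- ce _ (fun n => pr _ _) => apply ce_pairf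
  | |- ce _ (fun n => p1 _) => apply ce_p1f
  | |- ce _ (fun n => p2 _) => apply ce_p2f
  | |- ce _ (fun n => _ + _) => apply ce_add
  | |- ce _ (fun n => _ * _) => apply ce_mul
  | |- ce _ (fun n => _ - _) => apply ce_sub
  | |- ce _ (fun n => S _) => apply ce_Sf
  | |- ce _ (fun n => _) => apply ce_const
  | _ => assumption
  end.
Ltac ce_auto := repeat ce_step.

Lemma dec_stab : forall f1 f2 n, n <= f1 -> n <= f2 -> decode_aux f1 n = decode_aux f2 n.
Proof.
  induction f1; intros f2 n H1 H2.
  - assert (n = 0) by lia. subst. destruct f2; reflexivity.
  - destruct f2. { assert (n = 0) by lia. subst. reflexivity. }
    destruct (Nat.eq_dec n 0). { subst. reflexivity. }
    assert (Hm : n / 9 < n) by (apply Nat.div_lt; lia).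
    pose proof (p12_le (n/9)).
    cbn [decode_aux].
    rewrite (IHf1 f2 (p1 (n/9))) by lia. rewrite (IHf1 f2 (p2 (n/9))) by lia.
    rewrite (IHf1 f2 (n/9)) by lia. reflexivity.
Qed.

Lemma dec_ge f n : n <= f -> decode_aux f n = decode n.
Proof. intro; apply dec_stab; lia. Qed.

Lemma divmod9 m t : t < 9 -> (9 * m + t) / 9 = m /\ (9 * m + t) mod 9 = t.
Proof.
  intro. split.
  - rewrite (Nat.mul_comm 9), Nat.div_add_l by lia. rewrite Nat.div_small; lia.
  - rewrite Nat.add_comm, (Nat.mul_comm 9), Nat.Div0.mod_add. apply Nat.mod_small; lia.
Qed.

Lemma dec_comp a b : decode (9 * pr a b + 5) = cComp (decode a) (decode b).
Proof.
  destruct (pr_ge a b) as [Ha Hb]. destruct (divmod9 (pr a b) 5) as [D M]; [lia|].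
  unfold decode at 1. remember (9 * pr a b + 5) as N eqn:HN.
  destruct N as [|k]; [lia|]. cbn [decode_aux]. rewrite D, M.
  rewrite p1_pr, p2_pr, !dec_ge by lia. reflexivity.
Qed.
Lemma dec_pair a b : decode (9 * pr a b + 4) = cPair (decode a) (decode b).
Proof.
  destruct (pr_ge a b) as [Ha Hb]. destruct (divmod9 (pr a b) 4) as [D M]; [lia|].
  unfold decode at 1. remember (9 * pr a b + 4) as N eqn:HN.
  destruct N as [|k]; [lia|]. cbn [decode_aux]. rewrite D, M.
  rewrite p1_pr, p2_pr, !dec_ge by lia. reflexivity.
Qed.

Fixpoint sndn d := match d with 0 => 9 * pr 2 3 + 4 | S d => 9 * pr 3 (sndn d) + 5 end.
Definition Pn d := 9 * pr 2 (sndn d) + 5.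
Fixpoint Cn n := match n with 0 => 0 | S n => 9 * pr 1 (Cn n) + 5 end.
Definition E n j := 9 * pr (Pn (n - 1 - j)) (9 * pr j (Cn n) + 5) + 5.
Fixpoint W (F : nat -> nat) n j := match j with 0 => 0 | S j => pr (F (E n j)) (W F n j) end.
Definition pj d t := p1 (Nat.iter d p2 t).

Lemma ev_C O n x : eval O (decode (Cn n)) x n.
Proof. induction n. constructor. cbn [Cn]. rewrite dec_comp. econstructor. apply IHn. constructor. Qed.
Lemma ev_snd O d x : eval O (decode (sndn d)) x (Nat.iter d p2 x).
Proof.
  induction d; cbn [sndn].
  - rewrite dec_pair. pose proof (ePair O cFst cSnd x _ _ (eFst O x) (eSnd O x)).
    rewrite pr_p in H. exact H.
  - rewrite dec_comp. econstructor. apply IHd. constructor.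
Qed.
Lemma ev_P O d x : eval O (decode (Pn d)) x (pj d x).
Proof. unfold Pn. rewrite dec_comp. econstructor. apply ev_snd. constructor. Qed.

Lemma pj_W F n : forall m d, d < m -> pj d (W F n m) = F (E n (m - 1 - d)).
Proof.
  induction m; intros d Hd; [lia|]. simpl W. destruct d.
  - unfold pj. simpl. rewrite p1_pr. f_equal. f_equal. lia.
  - unfold pj. rewrite Nat.iter_succ_r, p2_pr. fold (pj d (W F n m)).
    rewrite IHm by lia. f_equal. f_equal. lia.
Qed.

Lemma W_mono F G n : (forall x, F x <= G x) -> forall m, W F n m <= W G n m.
Proof. intros H m; induction m; simpl; auto. apply pr_mono; auto. Qed.

Lemma ce_W O F : ce O F -> ce O (fun n => W F n n).
Proof.
  intro HF.
  assert (HC : ce O Cn).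
  { apply (ce_rec1 O Cn 0 (fun z => 9 * pr 1 (p2 z) + 5)). reflexivity.
    intros; simpl; now rewrite p2_pr. ce_auto. }
  assert (HS : ce O sndn).
  { apply (ce_rec1 O sndn (9 * pr 2 3 + 4) (fun z => 9 * pr 3 (p2 z) + 5)). reflexivity.
    intros; simpl; now rewrite p2_pr. ce_auto. }
  assert (HP : ce O Pn). { unfold Pn. ce_auto; try (apply (ce_compf O sndn); ce_auto). }
  assert (HE : ce O (fun z => E (p1 z) (p1 (p2 z)))).
  { unfold E. ce_auto; try (apply (ce_compf O Pn); ce_auto). apply (ce_compf O Cn); ce_auto. }
  assert (K : ce O (fun z => W F (p1 z) (p2 z))).
  { apply (ce_rec2 O (W F) (fun _ => 0) (fun z => pr (F (E (p1 z) (p1 (p2 z)))) (p2 (p2 z)))).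
    reflexivity. intros; cbn [W]; now rewrite !p2_pr, !p1_pr. ce_auto.
    ce_auto; try (apply (ce_compf O F); ce_auto). }
  apply (ce_2f O (W F) (fun n => n) (fun n => n)); ce_auto.
Qed.

Theorem mainTheorem2 :
  forall g : nat -> nat, order_fun g ->
  exists h : nat -> nat, order_fun h /\
    forall f : nat -> nat, DNR f -> bounded_by g f ->
      exists f' : nat -> nat, SNPR f' /\ bounded_by h f' /\ Tcomputes f f'.
Proof.
  intros g [[cg Hg] _].
  set (B := fun n => W g n n).
  assert (HB : ce (fun _ => 0) B).
  { apply ce_W. exists cg. exact Hg. }
  set (H := fix H n := match n with 0 => B 0 + 2 | S m => H m + B (S m) + 1 end).
  assert (HH : ce (fun _ => 0) H).
  { apply (ce_rec1 _ H (B 0 + 2) (fun z => p2 z + B (S (p1 z)) + 1)). reflexivity.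
    intros; cbn [H]; now rewrite p2_pr, p1_pr.
    ce_auto. apply (ce_compf _ B); ce_auto. }
  assert (Hmono1 : forall n, H n <= H (S n)) by (intro; cbn [H]; lia).
  assert (HgeB : forall n, B n < H n) by (intros [|n]; cbn [H]; lia).
  exists H. split.
  { split; [exact HH|]. split.
    - intros m n Hmn. induction Hmn; auto. eapply Nat.le_trans; eauto.
    - split.
      + intro k. exists k. induction k. lia. specialize (Hmono1 k). pose proof (HgeB (S k)).
        cbn [H]. lia.
      + cbn [H]. lia. }
  intros f Hd Hb. exists (fun n => W f n n). split; [|split].
  - intro e. exists (S e). intros n y Hn Hy Heq.
    set (j := e). set (d := n - 1 - j).
    assert (Hphi : phi (E n j) (E n j) (pj d y)).
    { unfold phi, eval0, E. rewrite !dec_comp. econstructor. econstructor.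
      apply ev_C. exact Hy. apply ev_P. }
    apply (Hd _ _ Hphi). rewrite <- Heq. rewrite pj_W by lia. f_equal. f_equal. lia.
  - intro n. eapply Nat.le_lt_trans. 2: apply HgeB. unfold B.
    apply W_mono. intro x; specialize (Hb x); lia.
  - destruct (ce_W f f (ce_oracle f)) as [c Hc]. exists c. exact Hc.
Qed.
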